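(* Let $G$ be a graph with edge set $E$, $k\ge1$, suppose $M_k(G)$ is a connected matroid, let $B$ be a base of $M_k(G)$ and $e\in B$, and let $A$ be the component of $G\langle B\rangle$ containing $e$. Suppose $e\notin E(\lfloor A\rfloor)$. Then exactly one of the two components of $A\setminus e$ is a tree, say $T$, and the fundamental cocircuit $K(e,B)$ equals $\{e\}\cup\{u\in E\setminus B: u \text{ has at least one end-vertex in } V(T)\}$.
   Context: Graphs are finite, may have loops and parallel edges, and have no isolated vertices; $A\setminus e$ deletes the edge $e$ and keeps all vertices (a single vertex is a tree). A leaf is a vertex incident to exactly one edge, which is not a loop. $\Delta H=|E(H)|-|V(H)|$. For $X\subseteq E$, $G\langle X\rangle$ is the subgraph with edge set $X$ and vertex set the vertices incident to $X$. For $k\ge0$, $M_k(G)$ is the matroid on $E$ whose circuits are the inclusion-minimal members of $\{C\subseteq E:C\neq\emptyset,\ |C|=|V(G\langle C\rangle)|+k\}$. A matroid is connected if its ground set has at least two elements and every two elements lie in a common circuit. For a base $B$ and $e\in B$, $K(e,B)$ is the unique cocircuit $K$ of the matroid with $K\cap B=\{e\}$. For a connected graph $A$ containing a cycle, its kernel $\lfloor A\rfloor$ is the subgraph obtained by repeatedly deleting leaves (with their incident edges) until no leaf remains (the components of $G\langle B\rangle$ each contain a cycle here). *)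

(* Defs.v *)
From mathcomp Require Import all_boot.
Set Implicit Arguments. Unset Strict Implicit. Unset Printing Implicit Defensive.

(* A finite multigraph: vertex type V, edge type E, and each edge f has
   end-vertices (ends f).1 and (ends f).2 (equal for a loop). *)
Section Graphs.
Variables (V E : finType) (ends : E -> V * V).

Definition incident (f : E) (v : V) : bool :=
  ((ends f).1 == v) || ((ends f).2 == v).

Definition is_loop (f : E) : bool := (ends f).1 == (ends f).2.

Definition no_isolated : Prop := forall v : V, exists f : E, incident f v.

(* vertex set of G<X> *)
Definition Vof (X : {set E}) : {set V} := [set v | [exists f in X, incident f v]].

Definition adj (F : {set E}) : rel V := fun x y =>
  [exists f in F, (((ends f).1 == x) && ((ends f).2 == y))
                  || (((ends f).1 == y) && ((ends f).2 == x))].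

(* degree of v in the edge set C (a loop counts twice) *)
Definition deg (C : {set E}) (v : V) : nat :=
  \sum_(f in C) (((ends f).1 == v) + ((ends f).2 == v)).

Definition graph_cycle (C : {set E}) : Prop :=
  C != set0 /\
  (forall x y, x \in Vof C -> y \in Vof C -> connect (adj C) x y) /\
  (forall v, v \in Vof C -> deg C v = 2).

Definition is_tree (W : {set V}) (F : {set E}) : Prop :=
  (exists x, x \in W) /\
  (forall x y, x \in W -> y \in W -> connect (adj F) x y) /\
  (forall C : {set E}, C \subset F -> ~ graph_cycle C).

Definition Mk_circuit (k : nat) (C : {set E}) : bool :=
  minset (fun X : {set E} => (X != set0) && (#|X| == #|Vof X| + k)) C.

Definition Mk_indep (k : nat) (I : {set E}) : bool :=
  [forall C : {set E}, (C \subset I) ==> ~~ Mk_circuit k C].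

Definition Mk_base (k : nat) (B : {set E}) : bool := maxset (Mk_indep k) B.

Definition Mk_cocircuit (k : nat) (K : {set E}) : bool :=
  minset (fun X : {set E} => [forall B : {set E}, Mk_base k B ==> (X :&: B != set0)]) K.

Definition Mk_connected (k : nat) : Prop :=
  2 <= #|E| /\
  forall x y : E, exists C, [/\ Mk_circuit k C, x \in C & y \in C].

(* component of G<B> containing edge e: vertex set and edge set *)
Definition compV (B : {set E}) (e : E) : {set V} :=
  [set v | connect (adj B) (ends e).1 v].
Definition compE (B : {set E}) (e : E) : {set E} :=
  [set f in B | (ends f).1 \in compV B e].

Definition components (W : {set V}) (F : {set E}) : {set {set V}} :=
  [set [set y in W | connect (adj F) x y] | x in W].

Definition edges_in (F : {set E}) (T : {set V}) : {set E} :=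
  [set f in F | ((ends f).1 \in T) && ((ends f).2 \in T)].

Definition leaf (W : {set V}) (F : {set E}) (v : V) : bool :=
  (v \in W) && (#|[set f in F | incident f v]| == 1)
  && [forall f in F, incident f v ==> ~~ is_loop f].

Inductive leaf_reduces : {set V} * {set E} -> {set V} * {set E} -> Prop :=
| lr_refl S : leaf_reduces S S
| lr_step W F v f S :
    leaf W F v -> f \in F -> incident f v ->
    leaf_reduces (W :\ v, F :\ f) S -> leaf_reduces (W, F) S.

Definition kernel_of (S K : {set V} * {set E}) : Prop :=
  leaf_reduces S K /\ (forall v, ~~ leaf K.1 K.2 v).

End Graphs.

(* Main.v *)
Require Import Defs.
From mathcomp Require Import all_boot.
From mathcomp Require Import zify.
Set Implicit Arguments. Unset Strict Implicit. Unset Printing Implicit Defensive.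

Section Aux.
Variables (V E : finType) (ends : E -> V * V).
Local Notation Vof := (Vof ends).
Local Notation adj := (adj ends).
Local Notation incident := (incident ends).
Local Notation is_loop := (is_loop ends).
Local Notation deg := (deg ends).

Lemma conn_ind (r : rel V) (P : V -> Prop) x y :
  P x -> (forall u w, P u -> r u w -> P w) -> connect r x y -> P y.
Proof.
move=> Px step /connectP[p pth ->]; elim: p x Px pth => [|z p IH] x Px //= /andP[rxz pth].
exact: (IH z (step _ _ Px rxz) pth).
Qed.

Lemma adjP (F : {set E}) x y : reflect (exists2 f, f \in F &
   ((ends f).1 == x) && ((ends f).2 == y) || ((ends f).1 == y) && ((ends f).2 == x))
  (adj F x y).
Proof.
apply: (iffP existsP) => [[f /andP[fF H]]|[f fF H]]; first by exists f.
by exists f; rewrite fF.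
Qed.

Lemma adj_sym (F : {set E}) : symmetric (adj F).
Proof. by move=> x y; apply/adjP/adjP => -[f fF H]; exists f => //; rewrite orbC. Qed.

Lemma conn_sym (F : {set E}) : connect_sym (adj F).
Proof. exact: sym_connect_sym (adj_sym F). Qed.

Lemma adj_inc (F : {set E}) x y : adj F x y -> exists2 f, f \in F & incident f x && incident f y.
Proof.
case/adjP=> f fF H; exists f => //; rewrite /incident.
by case/orP: H => /andP[/eqP -> /eqP ->]; rewrite !eqxx ?orbT.
Qed.

Lemma adj_edge (F : {set E}) f : f \in F -> adj F (ends f).1 (ends f).2.
Proof. by move=> fF; apply/adjP; exists f; rewrite ?eqxx. Qed.

Lemma adj_sub (F F' : {set E}) x y : F \subset F' -> adj F x y -> adj F' x y.
Proof. by move=> /subsetP sF /adjP[f fF H]; apply/adjP; exists f => //; apply: sF. Qed.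

Lemma conn_sub (F F' : {set E}) x y : F \subset F' -> connect (adj F) x y -> connect (adj F') x y.
Proof.
move=> sF; apply: connect_sub => u w H; apply: connect1; exact: adj_sub H.
Qed.

Lemma conn_edge (F : {set E}) x y : connect (adj F) x y -> x != y ->
  exists2 f, f \in F & incident f y.
Proof.
move=> c nxy.
have: y = x \/ exists2 f, f \in F & incident f y.
  apply: (conn_ind (P := fun z => z = x \/ exists2 f, f \in F & incident f z)) c.
    by left.
  move=> u w _ /adj_inc[f fF /andP[_ fw]]; right; by exists f.
by case=> // yx; rewrite yx eqxx in nxy.
Qed.

Lemma inc_other f v w z : incident f v -> incident f w -> incident f z ->
  w != v -> z != v -> w = z.
Proof.
rewrite /incident; case: (ends f) => p q /=.
by do ![case/orP=> /eqP ?; subst] => //=; rewrite ?eqxx.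
Qed.

Lemma leaf_remove (F : {set E}) f v x y : f \in F -> incident f v ->
  (forall g, g \in F -> incident g v -> g = f) ->
  x != v -> y != v -> connect (adj F) x y -> connect (adj (F :\ f)) x y.
Proof.
move=> fF fv uniq xv yv c.
set D := connect (adj (F :\ f)) x.
have noDv : ~ D v.
  move=> Dv; case: (conn_edge Dv xv) => g; rewrite inE => /andP[gf gF] gv.
  by move: gf; rewrite !inE (uniq g gF gv) eqxx.
have: D y \/ (y = v /\ exists2 w, incident f w & D w).
  apply: (conn_ind (P := fun z => D z \/ (z = v /\ exists2 w, incident f w & D w))) c.
    by left; exact: connect0.
  move=> u w Pu /adjP[g gF H].
  have gu : incident g u by case/orP: H => /andP[/eqP a1 /eqP a2]; rewrite /incident a1 a2 eqxx ?orbT.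
  have gw : incident g w by case/orP: H => /andP[/eqP a1 /eqP a2]; rewrite /incident a1 a2 eqxx ?orbT.
  case: Pu => [Du | [uv [w' fw' Dw']]].
    have uv : u != v by apply/eqP => uv; apply: noDv; rewrite -uv.
    case: (eqVneq g f) => [gf | gf].
      subst g; case: (eqVneq w v) => [wv | wv].
        by right; split=> //; exists u.
      by have := inc_other fv gu gw uv wv => uw; left; rewrite -uw.
    left; apply: connect_trans Du (connect1 _).
    by apply/adjP; exists g => //; rewrite !inE gf gF.
  subst u; have gf := uniq g gF gu; subst g.
  case: (eqVneq w v) => [wv | wv]; first by right; split=> //; exists w'.
  have w'v : w' != v by apply/eqP => w'v; apply: noDv; rewrite -w'v.
  by left; rewrite -(inc_other fv fw' gw w'v wv).
by case=> // -[yv']; rewrite yv' eqxx in yv.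
Qed.


Lemma inVof (X : {set E}) v : (v \in Vof X) = [exists f in X, incident f v].
Proof. by rewrite /Defs.Vof inE. Qed.

Lemma inVofP (X : {set E}) v : reflect (exists2 f, f \in X & incident f v) (v \in Vof X).
Proof.
rewrite inVof; apply: (iffP existsP) => [[f /andP[]]|[f fX fv]]; first by exists f.
by exists f; rewrite fX.
Qed.

Lemma VofS (X Y : {set E}) : X \subset Y -> Vof X \subset Vof Y.
Proof.
move=> /subsetP sXY; apply/subsetP => v /inVofP[f fX fv]; apply/inVofP; exists f => //.
exact: sXY.
Qed.

Lemma VofU (X Y : {set E}) : Vof (X :|: Y) = Vof X :|: Vof Y.
Proof.
apply/setP => v; apply/inVofP/setUP => [[f]|[]].
  by move=> /setUP[fX|fY] fv; [left|right]; apply/inVofP; exists f.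
  by move=> /inVofP[f fX fv]; exists f; rewrite // inE fX.
by move=> /inVofP[f fX fv]; exists f; rewrite // inE fX orbT.
Qed.

Lemma inc1 f : incident f (ends f).1.
Proof. by rewrite /incident eqxx. Qed.
Lemma inc2 f : incident f (ends f).2.
Proof. by rewrite /incident eqxx orbT. Qed.

Lemma Vof_gt0 (X : {set E}) : X != set0 -> 0 < #|Vof X|.
Proof.
case/set0Pn=> f fX; apply/card_gt0P; exists (ends f).1; apply/inVofP; exists f => //.
exact: inc1.
Qed.

Definition sparse (c : nat) (J : {set E}) :=
  forall Y : {set E}, Y \subset J -> Y != set0 -> #|Y| < #|Vof Y| + c.

Lemma sparse_sub c (J J' : {set E}) : J \subset J' -> sparse c J' -> sparse c J.
Proof. by move=> sJ sp Y sY; apply: sp; apply: subset_trans sJ. Qed.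

Lemma not_sparse c (J : {set E}) : ~ sparse c J ->
  exists Y : {set E}, [/\ Y \subset J, Y != set0 & #|Vof Y| + c <= #|Y|].
Proof.
move=> ns.
case: (boolP [exists Y : {set E}, [&& Y \subset J, Y != set0 & #|Vof Y| + c <= #|Y|]]).
  by case/existsP=> Y /and3P[]; exists Y.
move=> /existsPn H; case: ns => Y sY nY; have := H Y; rewrite sY nY /= -ltnNge.
done.
Qed.

Lemma circuit_of_dep k (Y : {set E}) : Y != set0 -> #|Vof Y| + k <= #|Y| ->
  exists2 C : {set E}, C \subset Y & Mk_circuit ends k C.
Proof.
move=> nY dY.
pose P := fun X : {set E} => (X != set0) && (#|Vof X| + k <= #|X|).
have PY : P Y by rewrite /P nY dY.
case: (minset_exists PY) => C /minsetP[/andP[nC dC] minC] sCY.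
exists C => //; apply/minsetP; split.
  rewrite nC /=; rewrite eqn_leq dC andbT leqNgt; apply/negP => gt.
  have hV := Vof_gt0 nC; case/set0Pn: (nC) => f fC.
  have cD := cardsD1 f C; rewrite fC in cD.
  have sV : Vof (C :\ f) \subset Vof C by apply: VofS; apply: subsetDl.
  have := subset_leq_card sV => lV.
  have nD : C :\ f != set0 by rewrite -card_gt0; lia.
  have := minC (C :\ f); rewrite /P nD /= => /(_ ltac:(lia) (subsetDl _ _)) eqC.
  by move: fC; rewrite -eqC !inE eqxx.
move=> X /andP[nX /eqP eX] sXC; apply: minC => //; by rewrite /P nX eX leqnn.
Qed.

Lemma indep_sparse k (I : {set E}) : Mk_indep ends k I <-> sparse k I.
Proof.
split.
  move=> /forallP ind Y sY nY; rewrite ltnNge; apply/negP => dY.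
  case: (circuit_of_dep nY dY) => C sCY cC.
  by have := ind C; rewrite (subset_trans sCY sY) /= cC.
move=> sp; apply/forallP => C; apply/implyP => sC; apply/negP => /minsetP[/andP[nC /eqP eC] _].
by have := sp C sC nC; rewrite eC ltnn.
Qed.

Lemma sparse_join c (T : {set V}) (F J : {set E}) g :
  sparse 0 F -> (forall f v, f \in F -> incident f v -> v \in T) ->
  sparse c J -> (forall f v, f \in J -> incident f v -> v \notin T) ->
  ((ends g).1 \in T) || ((ends g).2 \in T) ->
  (0 < c) || ~~ (((ends g).1 \in T) && ((ends g).2 \in T)) ->
  sparse c (F :|: J :|: [set g]).
Proof.
move=> spF FT spJ JT gT hc Y sY nY.
set Y1 := Y :&: F; set Y2 := Y :&: J.
set Vin := Vof Y :&: T; set Vout := Vof Y :\: T.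
have h1 : #|Y| <= #|Y1| + #|Y2| + (g \in Y).
  rewrite (cardsD1 g Y).
  have : Y :\ g \subset Y1 :|: Y2.
    apply/subsetP => x; rewrite !inE => /andP[xg xY].
    have := subsetP sY x xY; rewrite !inE (negbTE xg) orbF xY /=.
    by case/orP=> ->; rewrite ?orbT.
  move/subset_leq_card; rewrite cardsU; lia.
have h0 : #|Vin| + #|Vout| = #|Vof Y| by rewrite cardsID.
have h2 : #|Vof Y1| <= #|Vin|.
  apply: subset_leq_card; apply/subsetP => v /inVofP[f]; rewrite in_setI => /andP[fY fF] fv.
  by rewrite in_setI (FT f v fF fv) andbT; apply/inVofP; exists f.
have h3 : #|Vof Y2| <= #|Vout|.
  apply: subset_leq_card; apply/subsetP => v /inVofP[f]; rewrite in_setI => /andP[fY fJ] fv.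
  by rewrite in_setD (JT f v fJ fv) /=; apply/inVofP; exists f.
have h4 : Y1 != set0 -> #|Y1| < #|Vof Y1|.
  by move=> n1; have := spF Y1 (subsetIr _ _) n1; rewrite addn0.
have h5 : Y2 != set0 -> #|Y2| < #|Vof Y2| + c by apply: spJ; apply: subsetIr.
have h6 : g \in Y -> #|Y1| < #|Vin|.
  move=> gY; case: (eqVneq Y1 set0) => [->|n1]; last by have := h4 n1; lia.
  rewrite cards0 card_gt0; apply/set0Pn.
  case/orP: gT => gt; [exists (ends g).1|exists (ends g).2];
    rewrite in_setI gt andbT; apply/inVofP; exists g => //; [exact: inc1|exact: inc2].
have h7 : g \in Y -> (0 < c) || (0 < #|Vout|).
  move=> gY; case/orP: hc => [->//|]; rewrite negb_and => hc; apply/orP; right.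
  rewrite card_gt0; apply/set0Pn.
  case/orP: hc => gt; [exists (ends g).1|exists (ends g).2];
    rewrite in_setD gt /=; apply/inVofP; exists g => //; [exact: inc1|exact: inc2].
have hY := nY; rewrite -card_gt0 in hY.
case: (eqVneq Y1 set0) => [e1|n1]; case: (eqVneq Y2 set0) => [e2|n2];
  rewrite ?e1 ?e2 ?cards0 in h1 h2 h3 h6 *;
  case gY: (g \in Y) => /=; rewrite gY in h1;
  try (have := h6 is_true_true => h6');
  try (have := h7 is_true_true; case/orP => h7');
  try (have := h4 n1 => h4'); try (have := h5 n2 => h5'); lia.
Qed.

Lemma base_indep k (B : {set E}) : Mk_base ends k B -> sparse k B.
Proof. by case/maxsetP => /indep_sparse. Qed.

Lemma base_dep k (B : {set E}) u : Mk_base ends k B -> u \notin B ->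
  exists Z : {set E}, [/\ Z \subset u |: B, Z != set0 & #|Vof Z| + k <= #|Z|].
Proof.
move=> /maxsetP[_ mx] uB; apply: not_sparse => sp.
have := mx (u |: B) ((indep_sparse _ _).2 sp) (subsetUr _ _).
by move=> eq; move: uB; rewrite -eq setU11.
Qed.

Lemma base_swap k (B : {set E}) e u : Mk_base ends k B -> e \in B -> u \notin B ->
  Mk_indep ends k (u |: (B :\ e)) -> Mk_base ends k (u |: (B :\ e)).
Proof.
move=> bB eB uB ind; apply/maxsetP; split=> // Y indY sY.
have spY := (indep_sparse _ _).1 indY.
have spB := base_indep bB.
apply/eqP; rewrite eqEsubset sY andbT; apply/subsetP => f fY.
case: (boolP (f \in u |: (B :\ e))) => // fB'; exfalso.
have sB'Y := subsetP sY.
have [Z [sZ nZ dZ]] := base_dep bB uB.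
have eZ : e \in Z.
  apply: contraT => eZ.
  have sZ' : Z \subset u |: (B :\ e).
    apply/subsetP => x xZ; have := subsetP sZ x xZ; rewrite !inE.
    case/orP=> [->//|->]; rewrite andbT; apply/orP; right.
    by apply/eqP => xe; rewrite -xe xZ in eZ.
  by have := (indep_sparse _ _).1 ind Z sZ' nZ; rewrite ltnNge dZ.
case: (eqVneq f e) => [fe|fe].
  have : Z \subset Y.
    apply/subsetP => x xZ; have := subsetP sZ x xZ; rewrite !inE.
    case/orP=> [/eqP ->|xB]; first by apply: sB'Y; rewrite setU11.
    case: (eqVneq x e) => [->|xe]; first by rewrite -fe.
    by apply: sB'Y; rewrite !inE xe xB orbT.
  by move=> sZY; have := spY Z sZY nZ; rewrite ltnNge dZ.
have fB : f \notin B by apply: contraNN fB' => fB; rewrite !inE fe fB orbT.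
have fu : f != u by apply: contraNneq fB' => ->; rewrite setU11.
have [Y1 [sY1 nY1 dY1]] := base_dep bB fB.
have eY1 : e \in Y1.
  apply: contraT => eY1.
  have : Y1 \subset Y.
    apply/subsetP => x xY1; have := subsetP sY1 x xY1; rewrite !inE.
    case/orP=> [/eqP ->//|xB]; apply: sB'Y; rewrite !inE xB andbT; apply/orP; right.
    by apply/eqP => xe; rewrite -xe xY1 in eY1.
  by move=> sYY; have := spY Y1 sYY nY1; rewrite ltnNge dY1.
have fY1 : f \in Y1.
  apply: contraT => fY1.
  have : Y1 \subset B.
    apply/subsetP => x xY1; have := subsetP sY1 x xY1; rewrite !inE.
    by case/orP=> [/eqP xf|//]; rewrite -xf xY1 in fY1.
  by move=> sYB; have := spB Y1 sYB nY1; rewrite ltnNge dY1.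
set W0 := (Y1 :|: Z) :\ e.
have sW0 : W0 \subset Y.
  apply/subsetP => x; rewrite !inE => /andP[xe /orP[xY1|xZ]].
    have := subsetP sY1 x xY1; rewrite !inE; case/orP=> [/eqP ->//|xB].
    by apply: sB'Y; rewrite !inE xe xB orbT.
  have := subsetP sZ x xZ; rewrite !inE; case/orP=> [/eqP ->|xB].
    by apply: sB'Y; rewrite setU11.
  by apply: sB'Y; rewrite !inE xe xB orbT.
have nW0 : W0 != set0 by apply/set0Pn; exists f; rewrite !inE fe fY1.
have h1 := spY W0 sW0 nW0.
have h2 := cardsUI Y1 Z.
have h3 := cardsUI (Vof Y1) (Vof Z).
have sI : Y1 :&: Z \subset B.
  apply/subsetP => x; rewrite !inE => /andP[xY1 xZ].
  have := subsetP sY1 x xY1; have := subsetP sZ x xZ; rewrite !inE.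
  case/orP=> [/eqP xu|//]; case/orP=> [/eqP xf|//].
  by rewrite -xf xu eqxx in fu.
have nI : Y1 :&: Z != set0 by apply/set0Pn; exists e; rewrite !inE eY1 eZ.
have h4 := spB _ sI nI.
have h5 : #|Vof (Y1 :&: Z)| <= #|Vof Y1 :&: Vof Z|.
  by apply: subset_leq_card; rewrite subsetI !VofS ?subsetIl ?subsetIr.
have h6 := cardsD1 e (Y1 :|: Z); rewrite !inE eY1 /= in h6.
have h7 : #|Vof W0| <= #|Vof (Y1 :|: Z)| by apply: subset_leq_card; apply: VofS; apply: subsetDl.
rewrite VofU in h7.
rewrite -/W0 in h6; clear -h1 h2 h3 h4 h5 h6 h7 dZ dY1; lia.
Qed.

Lemma fund_cocircuit k (B : {set E}) e (X : {set E}) :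
  Mk_base ends k B -> e \in B -> X :&: B = [set e] ->
  (forall u, u \in X -> u != e -> Mk_base ends k (u |: (B :\ e))) ->
  (forall B', Mk_base ends k B' -> X :&: B' != set0) ->
  Mk_cocircuit ends k X /\
  (forall K, Mk_cocircuit ends k K -> K :&: B = [set e] -> K = X).
Proof.
move=> bB eB XB swap meet.
have key : forall K : {set E}, (forall B', Mk_base ends k B' -> K :&: B' != set0) ->
    K :&: B \subset [set e] -> X \subset K.
  move=> K mK sK; apply/subsetP => x xX.
  case: (eqVneq x e) => [->|xe].
    case/set0Pn: (mK B bB) => y yKB; have := subsetP sK y yKB; rewrite inE => /eqP ye.
    by move: yKB; rewrite ye inE => /andP[].
  case/set0Pn: (mK _ (swap x xX xe)) => y; rewrite !inE => /andP[yK /orP[/eqP yx|/andP[ye yB]]]; first by rewrite -yx.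
  have := subsetP sK y; rewrite !inE yK yB => /(_ isT) yee.
  by rewrite yee in ye.
have PX : [forall B0 : {set E}, Mk_base ends k B0 ==> (X :&: B0 != set0)].
  by apply/forallP => B0; apply/implyP; apply: meet.
have cX : Mk_cocircuit ends k X.
  apply/minsetP; split=> // X' /forallP PX' sX'; apply/eqP; rewrite eqEsubset sX' /=.
  apply: key; first by move=> B' bB'; exact: (implyP (PX' B') bB').
  by rewrite -XB; apply: setSI.
split=> // K /minsetP[/forallP PK minK] KB.
apply/esym; apply: minK => //; apply: key; first by move=> B' bB'; exact: (implyP (PK B') bB').
by rewrite KB.
Qed.

Definition leafless (D : {set E}) := forall f v, f \in D -> incident f v ->
  is_loop f \/ exists2 g, g \in D & (g != f) && incident g v.

Lemma leafless_kernel S K (D : {set E}) : leaf_reduces ends S K ->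
  D \subset S.2 -> leafless D -> D \subset K.2.
Proof.
elim=> [S'//|W F v f S' lf fF fv _ IH] /= sD lD; apply: IH => //=.
apply/subsetP => g gD; rewrite !inE (subsetP sD g gD) andbT.
apply/negP => /eqP gf; subst g.
move: lf; rewrite /leaf => /andP[/andP[_ c1] /forallP nl].
case: (lD f v gD fv) => [lp|[g gD' /andP[gf gv]]].
  by have := nl f; rewrite fF fv lp.
case/cards1P: c1 => x ex.
have : f \in [set f0 in F | incident f0 v] by rewrite inE fF fv.
have : g \in [set f0 in F | incident f0 v] by rewrite inE (subsetP sD g gD') gv.
by rewrite ex !inE => /eqP gx /eqP fx; rewrite gx fx eqxx in gf.
Qed.

Definition P0 (X : {set E}) := (X != set0) && (#|Vof X| <= #|X|).

Lemma P0_leafless D : minset P0 D -> leafless D.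
Proof.
move=> /minsetP[/andP[nD dD] minD] f v fD fv.
case: (boolP (is_loop f)) => [lp|nlp]; first by left.
case: (boolP [exists g in D, (g != f) && incident g v]) => [/existsP[g /andP[gD H]]|/existsPn H].
  by right; exists g.
exfalso.
have uniq : forall g, g \in D -> incident g v -> g = f.
  by move=> g gD gv; have := H g; rewrite gD gv andbT /= negbK => /eqP.
set D' := D :\ f.
have sV : Vof D' \subset Vof D :\ v.
  apply/subsetP => w /inVofP[g gD' gw]; move: gD'; rewrite /D' in_setD1 => /andP[gf gD].
  rewrite in_setD1; apply/andP; split; last by apply/inVofP; exists g.
  by apply/eqP => wv; subst w; rewrite (uniq g gD gw) eqxx in gf.
have vD : v \in Vof D by apply/inVofP; exists f.
have h1 := cardsD1 v (Vof D); rewrite vD in h1.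
have h2 := cardsD1 f D; rewrite fD in h2.
have h3 := subset_leq_card sV.
case: (eqVneq D' set0) => [e0|n0].
  rewrite -/D' e0 cards0 in h2.
  have : [set (ends f).1; (ends f).2] \subset Vof D.
    by apply/subsetP => w /set2P[]->; apply/inVofP; exists f; rewrite ?inc1 ?inc2.
  move/subset_leq_card; rewrite cards2 nlp => h4.
  clear -h2 h4 dD; lia.
have : P0 D' by rewrite /P0 n0 /=; rewrite -/D' in h2; clear -h1 h2 h3 dD; lia.
move=> PD'; have := minD D' PD' (subsetDl _ _) => eqD.
by move: fD; rewrite -eqD !inE eqxx.
Qed.

Lemma handshake (C : {set E}) : \sum_(v : V) deg C v = 2 * #|C|.
Proof.
rewrite /Defs.deg exchange_big /= -sum1_card big_distrr /=.
apply: eq_bigr => f _; rewrite big_split /= muln1.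
have s1 : forall w : V, \sum_(v : V) (w == v) = 1.
  move=> w; rewrite (bigD1 w) //= eqxx big1 // => v /negbTE vw.
  by rewrite eq_sym vw.
by rewrite !s1.
Qed.

Lemma deg0 (C : {set E}) v : v \notin Vof C -> deg C v = 0.
Proof.
move=> nv; apply: big1 => f fC; apply/eqP; rewrite addn_eq0 !eqb0.
apply/andP; split; apply: contra nv => H; apply/inVofP; exists f => //; by rewrite /incident H ?orbT.
Qed.

Lemma sum_deg_Vof (C : {set E}) : \sum_(v in Vof C) deg C v = 2 * #|C|.
Proof.
rewrite -handshake [RHS](bigID (fun v => v \in Vof C)) /=.
rewrite [X in _ = _ + X]big1 ?addn0 //.
by move=> v nv; apply: deg0.
Qed.

Lemma cycle_card (C : {set E}) : graph_cycle ends C -> #|C| = #|Vof C|.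
Proof.
case=> _ [_ d2]; have := sum_deg_Vof C.
rewrite (eq_bigr (fun _ => 2)) ?sum_nat_const; last by move=> v vC; apply: d2.
lia.
Qed.

Lemma deg_ge2 (D : {set E}) v : leafless D -> v \in Vof D -> 2 <= deg D v.
Proof.
move=> lD /inVofP[f fD fv]; rewrite /Defs.deg (bigD1 f) //=.
case: (lD f v fD fv) => [lp|[g gD /andP[gf gv]]].
  move: fv lp; rewrite /incident /Defs.is_loop => /orP[]/eqP -> /eqP ->; rewrite eqxx; lia.
rewrite (bigD1 g) /=; last by rewrite gD gf.
have : 1 <= ((ends f).1 == v) + ((ends f).2 == v) by move: fv; rewrite /incident; case/orP => ->; lia.
have : 1 <= ((ends g).1 == v) + ((ends g).2 == v) by move: gv; rewrite /incident; case/orP => ->; lia.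
lia.
Qed.

Lemma P0_cycle D : minset P0 D -> graph_cycle ends D.
Proof.
move=> mD; have lD := P0_leafless mD.
case/minsetP: mD => /andP[nD dD] minD.
have eqVD : #|Vof D| = #|D|.
  apply/eqP; rewrite eqn_leq dD /= leqNgt; apply/negP => lt.
  case/set0Pn: (nD) => f fD.
  have h2 := cardsD1 f D; rewrite fD in h2.
  have h3 : #|Vof (D :\ f)| <= #|Vof D| by apply: subset_leq_card; apply: VofS; apply: subsetDl.
  have h4 := Vof_gt0 nD.
  have n0 : D :\ f != set0 by rewrite -card_gt0; clear -h2 lt h4; lia.
  have : P0 (D :\ f) by rewrite /P0 n0 /=; clear -h2 h3 lt; lia.
  move=> PD'; have := minD _ PD' (subsetDl _ _) => eqD.
  by move: fD; rewrite -eqD !inE eqxx.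
split=> //; split.
  move=> x y xD yD; apply: contraT => nc.
  pose cx := fun z => connect (adj D) x z.
  pose D1 := [set f in D | cx (ends f).1]; pose D2 := D :\: D1.
  have same : forall f, f \in D -> cx (ends f).1 = cx (ends f).2.
    move=> f fD; rewrite /cx; apply/idP/idP => H.
      by apply: connect_trans H (connect1 _); apply: adj_edge.
    by apply: connect_trans H (connect1 _); rewrite adj_sym; apply: adj_edge.
  have V1 : forall v, v \in Vof D1 -> cx v.
    move=> v /inVofP[f]; rewrite !inE => /andP[fD f1] fv.
    by move: fv; rewrite /incident => /orP[]/eqP <- //; rewrite -same.
  have V2 : forall v, v \in Vof D2 -> ~~ cx v.
    move=> v /inVofP[f]; rewrite !inE => /andP[f1 fD] fv; rewrite fD /= in f1.
    by move: fv; rewrite /incident => /orP[]/eqP <- //; rewrite -same.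
  have UD : D = D1 :|: D2.
    apply/setP => f; rewrite !inE; case: (f \in D); rewrite ?andbT ?andbF //=.
    by case: (cx _).
  have hV : #|Vof D| = #|Vof D1| + #|Vof D2|.
    rewrite UD VofU cardsU; have -> : Vof D1 :&: Vof D2 = set0.
      apply/setP => v; rewrite in_setI in_set0; apply/negP => /andP[v1 v2].
      by have := V2 v v2; rewrite (V1 v v1).
    by rewrite cards0 subn0.
  have hD : #|D| = #|D1| + #|D2|.
    rewrite -(cardsID D1 D); congr (_ + _); apply: eq_card => f.
    by rewrite !inE; case: (f \in D); rewrite ?andbT ?andbF.
  have n1 : D1 != set0.
    case/inVofP: xD => f fD fx; apply/set0Pn; exists f; rewrite !inE fD /=.
    move: fx; rewrite /incident => /orP[]/eqP fx; first by rewrite fx /cx connect0.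
    by rewrite same // fx /cx connect0.
  have n2 : D2 != set0.
    case/inVofP: yD => f fD fy; apply/set0Pn; exists f; rewrite !inE fD andbT.
    have : ~~ cx y by [].
    by move: fy; rewrite /incident => /orP[]/eqP <- //; rewrite -same.
  have : P0 D1 || P0 D2 by rewrite /P0 n1 n2 /=; clear -hV hD eqVD; apply/orP; lia.
  case/orP => [P1|P2].
    have s1 : D1 \subset D by apply/subsetP => f; rewrite inE => /andP[].
    have := minD _ P1 s1 => e1.
    case/set0Pn: n2 => f; rewrite /D2 in_setD e1 => /andP[nf fD].
    by rewrite fD in nf.
  have := minD _ P2 (subsetDl _ _) => e2.
  case/set0Pn: n1 => f f1.
  have fD : f \in D2 by rewrite e2; move: f1; rewrite inE => /andP[].
  by move: fD; rewrite /D2 in_setD f1.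
move=> v vD; apply/eqP; rewrite eqn_leq (deg_ge2 lD vD) andbT.
have := sum_deg_Vof D; rewrite -eqVD => hs.
have : \sum_(w in Vof D) (deg D w - 2) == 0.
  have : \sum_(w in Vof D) deg D w = \sum_(w in Vof D) (deg D w - 2) + \sum_(w in Vof D) 2.
    by rewrite -big_split /=; apply: eq_bigr => w wD; rewrite subnK // deg_ge2.
  rewrite sum_nat_const hs; lia.
rewrite sum_nat_eq0 => /forallP /(_ v); rewrite vD /= subn_eq0.
done.
Qed.

Lemma tree_of_forest (W : {set V}) (F : {set E}) : (exists x, x \in W) ->
  (forall x y, x \in W -> y \in W -> connect (adj F) x y) -> sparse 0 F -> is_tree ends W F.
Proof.
move=> ne cn sp; split=> //; split=> // C sC gC.
have := cycle_card gC; have := sp C sC (proj1 gC); rewrite addn0; lia.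
Qed.

Lemma nonforest_min (F : {set E}) : ~ sparse 0 F -> exists2 D, minset P0 D & D \subset F.
Proof.
move/not_sparse=> [Y [sY nY dY]].
have PY : P0 Y by rewrite /P0 nY -(addn0 #|Vof Y|).
case: (minset_exists PY) => D mD sD; exists D => //; exact: subset_trans sD sY.
Qed.

Lemma not_tree (W : {set V}) (F : {set E}) : ~ sparse 0 F -> ~ is_tree ends W F.
Proof.
move/nonforest_min=> [D mD sD] [_ [_ nc]]; exact: (nc D sD (P0_cycle mD)).
Qed.

Lemma sparse_dec c (J : {set E}) : sparse c J \/ ~ sparse c J.
Proof.
case: (boolP [forall Y : {set E}, (Y \subset J) ==> (Y != set0) ==> (#|Y| < #|Vof Y| + c)]).
  move=> /forallP H; left => Y sY nY; by have := H Y; rewrite sY nY.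
move=> /forallPn[Y]; rewrite !negb_imply => /and3P[sY nY H]; right => sp.
by rewrite (sp Y sY nY) in H.
Qed.

Lemma leafless_of (S : {set E}) :
  (forall f v, f \in S -> incident f v -> ~~ is_loop f ->
     (forall g, g \in S -> incident g v -> g = f) -> False) -> leafless S.
Proof.
move=> H f v fS fv.
case: (boolP (is_loop f)) => [lp|nlp]; first by left.
case: (boolP [exists g in S, (g != f) && incident g v]) => [/existsP[g /andP[gS Hg]]|/existsPn Hg].
  by right; exists g.
exfalso; apply: (H f v fS fv nlp) => g gS gv.
by have := Hg g; rewrite gS gv andbT /= negbK => /eqP.
Qed.

Lemma ne_v (S : {set E}) f v g z : (forall h, h \in S -> incident h v -> h = f) ->
  g \in S -> incident g z -> g != f -> z != v.
Proof. by move=> uq gS gz gf; apply/eqP => zv; subst z; rewrite (uq g gS gz) eqxx in gf. Qed.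

Lemma swapD (S : {set E}) e f : (S :\ e) :\ f \subset (S :\ f) :\ e.
Proof. by apply/subsetP => g; rewrite !inE andbCA. Qed.
End Aux.

Theorem mainTheorem18 (V E : finType) (ends : E -> V * V) (k : nat)
    (B : {set E}) (e : E) :
  no_isolated ends ->
  1 <= k ->
  Mk_connected ends k ->
  Mk_base ends k B ->
  e \in B ->
  (exists K, kernel_of ends (compV ends B e, compE ends B e) K /\ e \notin K.2) ->
  exists T T' : {set V},
    [/\ components ends (compV ends B e) (compE ends B e :\ e) = [set T; T'],
        T != T',
        is_tree ends T (edges_in ends (compE ends B e :\ e) T),
        ~ is_tree ends T' (edges_in ends (compE ends B e :\ e) T') &
        let X := e |: [set u in ~: B | [exists v in T, incident ends u v]] in
        [/\ Mk_cocircuit ends k X,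
            X :&: B = [set e] &
            forall K, Mk_cocircuit ends k K -> K :&: B = [set e] -> K = X]].
Proof.
move=> _ k1 [_ conn] bB eB [K [[lrK _] eK]].
set W := compV ends B e.
set A := compE ends B e.
set a := (ends e).1.
set b := (ends e).2.
have inW : forall v, (v \in W) = connect (adj ends B) a v by move=> v; rewrite /W /compV inE.
have aW : a \in W by rewrite inW connect0.
have BW : forall f, f \in B -> ((ends f).1 \in W) = ((ends f).2 \in W).
  move=> f fB; rewrite !inW; apply/idP/idP => H.
    by apply: connect_trans H (connect1 _); apply: adj_edge.
  by apply: connect_trans H (connect1 _); rewrite adj_sym; apply: adj_edge.
have bW : b \in W by rewrite /b -BW.
have inA : forall f, (f \in A) = (f \in B) && ((ends f).1 \in W) by move=> f; rewrite /A /compE inE.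
have eA : e \in A by rewrite inA eB aW.
have A2 : forall f, f \in A -> ((ends f).1 \in W) && ((ends f).2 \in W).
  by move=> f; rewrite inA => /andP[fB f1]; rewrite f1 -BW.
have kernel_use : forall D : {set E}, D \subset A -> leafless ends D -> e \in D -> False.
  move=> D sD lD eD; have := subsetP (leafless_kernel lrK sD lD) e eD.
  by rewrite (negbTE eK).
clearbody A W.
set A' := A :\ e.
have inA' : forall f, (f \in A') = (f != e) && (f \in A) by move=> f; rewrite in_setD1.
have reach : forall x, x \in W -> connect (adj ends A') a x || connect (adj ends A') b x.
  move=> x; rewrite inW => cx.
  have : (x \in W) /\ (connect (adj ends A') a x || connect (adj ends A') b x); last by case.
  apply: (conn_ind (P := fun z => z \in W /\ (connect (adj ends A') a z || connect (adj ends A') b z))) cx.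
    by rewrite aW connect0.
  move=> u w [uW cu] uw.
  have wW : w \in W by rewrite inW (connect_trans _ (connect1 uw)) // -inW.
  split=> //; case/adjP: uw => g gB H.
  case: (eqVneq g e) => [ge|ge].
    subst g; case/orP: H => [/andP[_ /eqP <-]|/andP[/eqP <- _]]; rewrite connect0 ?orbT //.
  have gA' : g \in A'.
    rewrite inA' ge inA gB /=.
    by case/orP: H => /andP[/eqP -> _].
  case/orP: cu => c; apply/orP; [left|right]; apply: connect_trans c (connect1 _);
    by apply/adjP; exists g.
have nab : ~~ connect (adj ends A') b a.
  apply/negP => cba.
  pose Q := fun S : {set E} => [&& e \in S, S \subset A & connect (adj ends (S :\ e)) b a].
  have QA : Q A by rewrite /Q eA subxx.
  case: (minset_exists QA) => S /minsetP[/and3P[eS sSA cS] minS] _.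
  apply: (kernel_use S sSA _ eS); apply: leafless_of => f v fS fv nlp uq.
  case: (eqVneq f e) => [fe|fe].
    subst f; have nba : b != a by rewrite eq_sym.
    have cab : connect (adj ends (S :\ e)) a b by rewrite conn_sym.
    have [g g1 ga] := conn_edge cS nba.
    have [g' g1' gb] := conn_edge cab nlp.
    move: g1 g1'; rewrite !inE => /andP[ge gS] /andP[ge' gS'].
    move: fv; rewrite /incident => /orP[]/eqP va.
      by rewrite (uq g gS) ?eqxx // -va in ge.
    by rewrite (uq g' gS') ?eqxx // -va in ge'.
  have Q' : Q (S :\ f).
    rewrite /Q !inE eq_sym fe eS /= (subset_trans (subsetDl _ _) sSA) /=.
    apply: conn_sub (swapD _ _ _) _.
    have uq' : forall g, g \in S :\ e -> incident ends g v -> g = f.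
      by move=> g; rewrite inE => /andP[_ gS]; apply: uq.
    apply: leaf_remove uq' _ _ cS; first by rewrite !inE fe.
    - exact: fv.
    - by apply: (ne_v uq eS (inc2 _ _)); rewrite eq_sym.
    - by apply: (ne_v uq eS (inc1 _ _)); rewrite eq_sym.
  have := minS _ Q' (subsetDl _ _) => eqS.
  by move: fS; rewrite -eqS !inE eqxx.
have nab' : ~~ connect (adj ends A') a b by rewrite conn_sym.
have A'W : forall f, f \in A' -> ((ends f).1 \in W) && ((ends f).2 \in W).
  by move=> f; rewrite inA' => /andP[_]; apply: A2.
have side : forall r f, f \in A' ->
    ((ends f).1 \in [set y in W | connect (adj ends A') r y]) =
    ((ends f).2 \in [set y in W | connect (adj ends A') r y]).
  move=> r f fA; rewrite !inE; case/andP: (A'W f fA) => -> -> /=.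
  apply/idP/idP => H.
    by apply: connect_trans H (connect1 _); apply: adj_edge.
  by apply: connect_trans H (connect1 _); rewrite adj_sym; apply: adj_edge.
set Ca := [set y in W | connect (adj ends A') a y].
set Cb := [set y in W | connect (adj ends A') b y].
have aCa : a \in Ca by rewrite inE aW connect0.
have bCb : b \in Cb by rewrite inE bW connect0.
have bCa : b \notin Ca by rewrite inE negb_and nab' orbT.
have CaCb : forall v, v \in Ca -> v \notin Cb.
  move=> v; rewrite !inE => /andP[_ c1]; apply/negP => /andP[_ c2].
  by move/negP: nab'; apply; apply: connect_trans c1 _; rewrite conn_sym.
have Cab : Ca != Cb by apply/eqP => eC; move: bCa; rewrite eC bCb.
have comps : components ends W A' = [set Ca; Cb].
  apply/setP => S; apply/imsetP/set2P => [[x xW ->]|[]->].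
    case/orP: (reach x xW) => cx; [left|right]; apply/setP => y; rewrite !inE;
      by rewrite (same_connect (conn_sym _ _) cx y).
    by exists a.
  by exists b.
set Za := edges_in ends A' Ca.
set Zb := edges_in ends A' Cb.
have inZ : forall (C : {set V}) f, (f \in edges_in ends A' C) = (f \in A') && (((ends f).1 \in C) && ((ends f).2 \in C)).
  by move=> C f; rewrite /edges_in inE.
have A'ab : forall f, f \in A' -> (f \in Za) || (f \in Zb).
  move=> f fA; rewrite !inZ fA /=.
  have f1W : (ends f).1 \in W by case/andP: (A'W f fA).
  rewrite -(side a f fA) -(side b f fA) !andbb.
  by rewrite /Ca /Cb !inE f1W /=; apply: reach.
have ZaA : Za \subset A.
  by apply/subsetP => f; rewrite inZ inA' => /andP[/andP[_ ->]].
have ZbA : Zb \subset A.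
  by apply/subsetP => f; rewrite inZ inA' => /andP[/andP[_ ->]].
have Zne : forall f, (f \in Za) || (f \in Zb) -> f != e.
  by move=> f; rewrite !inZ !inA' => /orP[] /andP[/andP[]].
have F10 : ~ (~ sparse ends 0 Za /\ ~ sparse ends 0 Zb).
  case=> /nonforest_min[Da mDa sDa] /nonforest_min[Db mDb sDb].
  have lDa := P0_leafless mDa; have lDb := P0_leafless mDb.
  case/minsetP: (mDa) => /andP[nDa _] _; case/minsetP: (mDb) => /andP[nDb _] _.
  case/set0Pn: nDa => ha haD; case/set0Pn: nDb => hb hbD.
  have haZ := subsetP sDa ha haD; have hbZ := subsetP sDb hb hbD.
  set xa := (ends ha).1; set xb := (ends hb).1.
  have hae : ha != e by apply: Zne; rewrite haZ.
  have hbe : hb != e by apply: Zne; rewrite hbZ orbT.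
  pose Q := fun S : {set E} => [&& e \in S, S \subset A, Da \subset S, Db \subset S,
     connect (adj ends (S :\ e)) a xa & connect (adj ends (S :\ e)) b xb].
  have QA : Q A.
    rewrite /Q eA subxx (subset_trans sDa ZaA) (subset_trans sDb ZbA) /=.
    move: haZ hbZ; rewrite !inZ => /andP[_ /andP[+ _]] /andP[_ /andP[+ _]].
    by rewrite !inE => /andP[_ ->] /andP[_ ->].
  case: (minset_exists QA) => S /minsetP[QS minS] _.
  case/and5P: QS => eS sSA DaS DbS /andP[ca cb].
  apply: (kernel_use S sSA _ eS); apply: leafless_of => f v fS fv nlp uq.
  case fDa: (f \in Da).
    case: (lDa f v fDa fv) => [lp|[g gD /andP[gf gv]]]; first by rewrite lp in nlp.
    by rewrite (uq g (subsetP DaS g gD) gv) eqxx in gf.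
  case fDb: (f \in Db).
    case: (lDb f v fDb fv) => [lp|[g gD /andP[gf gv]]]; first by rewrite lp in nlp.
    by rewrite (uq g (subsetP DbS g gD) gv) eqxx in gf.
  have haS := subsetP DaS ha haD; have hbS := subsetP DbS hb hbD.
  case: (eqVneq f e) => [fe|fe].
    subst f; move: fv; rewrite /incident => /orP[]/eqP va.
      case: (eqVneq xa a) => [xaa|xaa].
        have hv : incident ends ha v by rewrite -va -/a -xaa; exact: inc1.
        have hae' := uq ha haS hv.
        by rewrite hae' eqxx in hae.
      have cxa : connect (adj ends (S :\ e)) xa a by rewrite conn_sym.
      have [g g1 ga] := conn_edge cxa xaa.
      move: g1; rewrite !inE => /andP[ge gS].
      by rewrite (uq g gS) ?eqxx // -va in ge.
    case: (eqVneq xb b) => [xbb|xbb].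
      have hv : incident ends hb v by rewrite -va -/b -xbb; exact: inc1.
      have hbe' := uq hb hbS hv.
      by rewrite hbe' eqxx in hbe.
    have cxb : connect (adj ends (S :\ e)) xb b by rewrite conn_sym.
    have [g g1 gb] := conn_edge cxb xbb.
    move: g1; rewrite !inE => /andP[ge gS].
    by rewrite (uq g gS) ?eqxx // -va in ge.
  have uq' : forall g, g \in S :\ e -> incident ends g v -> g = f.
    by move=> g; rewrite inE => /andP[_ gS]; apply: uq.
  have fSe : f \in S :\ e by rewrite !inE fe.
  have ef : e != f by rewrite eq_sym.
  have haf : ha != f by apply/eqP => hf; rewrite -hf haD in fDa.
  have hbf : hb != f by apply/eqP => hf; rewrite -hf hbD in fDb.
  have Q' : Q (S :\ f).
    rewrite /Q !inE ef eS /= (subset_trans (subsetDl _ _) sSA) /=.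
    apply/and4P; split.
    - by apply/subsetP => g gD; rewrite !inE (subsetP DaS g gD) andbT; apply/eqP => gf; rewrite -gf gD in fDa.
    - by apply/subsetP => g gD; rewrite !inE (subsetP DbS g gD) andbT; apply/eqP => gf; rewrite -gf gD in fDb.
    - apply: conn_sub (swapD _ _ _) _; apply: leaf_remove uq' _ _ ca => //.
      + exact: (ne_v uq eS (inc1 _ _) ef).
      + exact: (ne_v uq haS (inc1 _ _) haf).
    - apply: conn_sub (swapD _ _ _) _; apply: leaf_remove uq' _ _ cb => //.
      + exact: (ne_v uq eS (inc2 _ _) ef).
      + exact: (ne_v uq hbS (inc1 _ _) hbf).
  have := minS _ Q' (subsetDl _ _) => eqS.
  by move: fS; rewrite -eqS !inE eqxx.
have spBk := base_indep bB.
have F11 : ~ (sparse ends 0 Za /\ sparse ends 0 Zb).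
  case=> spa spb.
  have spA : sparse ends 0 A.
    apply: sparse_sub (sparse_join (T := Ca) (g := e) spa _ spb _ _ _).
    - apply/subsetP => f fA; rewrite !in_setU in_set1.
      case: (eqVneq f e) => [->|fe]; first by rewrite orbT.
      have fA' : f \in A' by rewrite inA' fe fA.
      by case/orP: (A'ab f fA') => ->; rewrite ?orbT.
    - by move=> f v; rewrite inZ => /andP[_ /andP[f1 f2]]; rewrite /incident => /orP[]/eqP <-.
    - move=> f v; rewrite inZ => /andP[_ /andP[f1 f2]]; rewrite /incident => /orP[]/eqP <-.
        by apply/negP => /CaCb; rewrite f1.
      by apply/negP => /CaCb; rewrite f2.
    - by rewrite aCa.
    - by rewrite negb_and bCa orbT.
  case: (boolP [exists u, (u \notin B) && (((ends u).1 \in W) || ((ends u).2 \in W))]).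
    case/existsP => u /andP[uB uW].
    have : sparse ends k (u |: B).
      apply: sparse_sub (sparse_join (T := W) (J := B :\: A) (g := u) spA _ _ _ uW _).
      - apply/subsetP => f; rewrite !inE => /orP[->//|fB]; rewrite ?orbT //.
        by case fA: (f \in A); rewrite ?fB ?orbT.
      - by move=> f v /A2 /andP[f1 f2]; rewrite /incident => /orP[]/eqP <-.
      - by apply: sparse_sub spBk; apply: subsetDl.
      - move=> f v; rewrite inE => /andP[fA fB] fv; apply/negP => vW.
        have f1 : (ends f).1 \in W.
          by move: fv; rewrite /incident => /orP[]/eqP fv; rewrite ?fv // BW // fv.
        by rewrite inA fB f1 in fA.
      - by rewrite k1.
    move/indep_sparse => ind; case/maxsetP: bB => _ mx.
    by have := mx _ ind (subsetUr _ _) => eq; move: uB; rewrite -eq setU11.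
  move/existsPn => hu.
  have [C [cC eC _]] := conn e e.
  case/minsetP: (cC) => /andP[nC /eqP hC] minC.
  set C1 := C :&: A; set C2 := C :\: A.
  have hc := cardsID A C; rewrite -/C1 -/C2 in hc.
  have outW : forall f v, f \in C2 -> incident ends f v -> v \notin W.
    move=> f v; rewrite inE => /andP[fA _] fv; apply/negP => vW.
    have := hu f; case fB: (f \in B) => /=.
      have f1 : (ends f).1 \in W.
        by move: fv; rewrite /incident => /orP[]/eqP fv; rewrite ?fv // BW // fv.
      by rewrite inA fB f1 in fA.
    by move: fv; rewrite /incident => /orP[]/eqP fv; rewrite fv vW ?orbT.
  have hV : #|Vof ends C| = #|Vof ends C1| + #|Vof ends C2|.
    have -> : C = C1 :|: C2 by rewrite setID.
    rewrite VofU cardsU; have -> : Vof ends C1 :&: Vof ends C2 = set0.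
      apply/setP => v; rewrite in_setI in_set0; apply/negP => /andP[/inVofP[f f1 fv] /inVofP[g g2 gv]].
      have := outW g v g2 gv; move: f1; rewrite inE => /andP[_ /A2 /andP[x1 x2]].
      by move: fv; rewrite /incident => /orP[]/eqP <-; rewrite ?x1 ?x2.
    by rewrite cards0 subn0.
  have n1 : C1 != set0 by apply/set0Pn; exists e; rewrite inE eC eA.
  have h1 := spA C1 (subsetIr _ _) n1.
  have h2 : #|Vof ends C2| + k <= #|C2| by rewrite addn0 in h1; clear -hV hc hC h1; lia.
  have n2 : C2 != set0 by rewrite -card_gt0; clear -h2 k1; lia.
  have [C' sC' cC'] := circuit_of_dep n2 h2.
  case/minsetP: cC' => PC' _.
  have := minC _ PC' (subset_trans sC' (subsetDl _ _)) => eqC.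
  by have := subsetP sC' e; rewrite eqC eC inE eA => /(_ isT).
have oriented : forall (t : V) (T T' : {set V}),
    (forall y, (y \in T) = (y \in W) && connect (adj ends A') t y) ->
    (forall f, f \in A' -> ((ends f).1 \in T) = ((ends f).2 \in T)) ->
    incident ends e t -> t \in W ->
    components ends W A' = [set T; T'] -> T != T' ->
    sparse ends 0 (edges_in ends A' T) -> ~ sparse ends 0 (edges_in ends A' T') ->
  exists T T' : {set V},
    [/\ components ends W A' = [set T; T'],
        T != T',
        is_tree ends T (edges_in ends A' T),
        ~ is_tree ends T' (edges_in ends A' T') &
        let X := e |: [set u in ~: B | [exists v in T, incident ends u v]] in
        [/\ Mk_cocircuit ends k X,
            X :&: B = [set e] &
            forall K, Mk_cocircuit ends k K -> K :&: B = [set e] -> K = X]].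
  move=> t T T' HT sT et tW HC Hne spT nspT'.
  have tT : t \in T by rewrite HT tW connect0.
  set ZT := edges_in ends A' T.
  have KT : forall f v, f \in B -> f != e -> incident ends f v -> v \in T -> f \in ZT.
    move=> f v fB fe fv vT.
    have vW : v \in W by move: vT; rewrite HT => /andP[].
    have f1 : (ends f).1 \in W.
      by move: fv; rewrite /incident => /orP[]/eqP fv; rewrite ?fv // BW // fv.
    have fA' : f \in A' by rewrite inA' fe inA fB f1.
    rewrite /ZT inZ fA' /= -(sT f fA') andbb.
    by move: fv; rewrite /incident => /orP[]/eqP fv; rewrite ?fv // sT // fv.
  exists T, T'; split => //.
  - apply: tree_of_forest => //; first by exists t.
    have cT : forall x, x \in T -> connect (adj ends ZT) t x.
      move=> x; rewrite HT => /andP[xW cx].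
      have : x \in T /\ connect (adj ends ZT) t x; last by case.
      apply: (conn_ind (P := fun z => z \in T /\ connect (adj ends ZT) t z)) cx.
        by rewrite tT connect0.
      move=> u w [uT cu] uw.
      have /andP[uW ctu] : (u \in W) && connect (adj ends A') t u by rewrite -HT.
      case/adjP: (uw) => g gA H.
      have wW : w \in W.
        by case/andP: (A'W g gA); case/orP: H => /andP[/eqP -> /eqP ->].
      have wT : w \in T by rewrite HT wW (connect_trans ctu (connect1 uw)).
      have gT : g \in ZT.
        by rewrite /ZT inZ gA /=; case/orP: H => /andP[/eqP -> /eqP ->]; rewrite uT wT.
      split=> //; apply: connect_trans cu (connect1 _); apply/adjP; exists g => //.
    move=> x y xT yT; have := cT x xT; rewrite conn_sym => cxt.
    exact: connect_trans cxt (cT y yT).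
  - exact: not_tree.
  move=> X.
  have XB : X :&: B = [set e].
    apply/setP => x; rewrite /X !inE.
    case: (eqVneq x e) => [->|xe] /=; first by rewrite eB.
    by case: (x \in B); rewrite ?andbF.
  have swap : forall u, u \in X -> u != e -> Mk_base ends k (u |: (B :\ e)).
    move=> u; rewrite /X !inE => /orP[/eqP ue|/andP[uB /existsP[v /andP[vT uv]]]] ue'.
      by rewrite ue eqxx in ue'.
    apply: base_swap bB eB uB _; apply/indep_sparse.
    apply: sparse_sub (sparse_join (T := T) (F := ZT) (J := B :\: (e |: ZT)) (g := u) spT _ _ _ _ _).
    - apply/subsetP => x; rewrite !in_setU in_set1 in_setD1 => /orP[->|/andP[xe xB]]; rewrite ?orbT //.
      by case xZ: (x \in ZT); rewrite //= in_setD in_setU1 xZ (negbTE xe) xB.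
    - by move=> f w; rewrite inZ => /andP[_ /andP[f1 f2]]; rewrite /incident => /orP[]/eqP <-.
    - exact: sparse_sub (subsetDl _ _) spBk.
    - move=> f w; rewrite in_setD in_setU1 negb_or => /andP[/andP[fe fZ] fB] fw.
      by apply/negP => wT; rewrite (KT f w fB fe fw wT) in fZ.
    - by move: uv; rewrite /incident => /orP[]/eqP ->; rewrite vT ?orbT.
    - by rewrite k1.
  have meet : forall B', Mk_base ends k B' -> X :&: B' != set0.
    move=> B' bB'; apply/negP => /eqP X0.
    have nX : forall f, f \in B' -> f \notin X.
      move=> f fB; apply/negP => fX.
      have : f \in X :&: B' by rewrite inE fX fB.
      by rewrite X0 inE.
    set F' := [set f in B' | [exists v in T, incident ends f v]].
    have F'Z : F' \subset ZT.
      apply/subsetP => f fF; rewrite /F' inE in fF; case/andP: fF => fB' ex.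
      case/existsP: (ex) => v /andP[vT fv].
      have nf := nX f fB'; rewrite /X !inE ex andbT negb_or negbK in nf; case/andP: nf => fe fB.
      exact: KT fB fe fv vT.
    have : sparse ends k (e |: B').
      apply: sparse_sub (sparse_join (T := T) (F := F') (J := B' :\: F') (g := e) (sparse_sub F'Z spT) _ _ _ _ _).
      - apply/subsetP => x; rewrite !in_setU in_set1 => /orP[->|xB]; rewrite ?orbT //.
        by case xF: (x \in F'); rewrite //= in_setD xF xB.
      - move=> f w /(subsetP F'Z); rewrite inZ => /andP[_ /andP[f1 f2]].
        by rewrite /incident => /orP[]/eqP <-.
      - exact: sparse_sub (subsetDl _ _) (base_indep bB').
      - move=> f w; rewrite in_setD => /andP[fF fB] fw; apply/negP => wT.
        by move: fF; rewrite inE fB /=; case/existsP; exists w; rewrite wT fw.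
      - by move: et; rewrite /incident => /orP[]/eqP ->; rewrite tT ?orbT.
      - by rewrite k1.
    move/indep_sparse => ind; case/maxsetP: bB' => _ mx.
    have := mx _ ind (subsetUr _ _) => eq.
    have eB' : e \in B' by rewrite -eq setU11.
    by have := nX e eB'; rewrite /X !inE eqxx.
  have [c1 c2] := fund_cocircuit bB eB XB swap meet.
  by split.
case: (sparse_dec ends 0 Za) => spa; case: (sparse_dec ends 0 Zb) => spb.
- by case: F11.
- apply: (oriented a Ca Cb) => //.
  + by move=> y; rewrite /Ca inE.
  + exact: side a.
  + exact: inc1.
- apply: (oriented b Cb Ca) => //.
  + by move=> y; rewrite /Cb inE.
  + exact: side b.
  + exact: inc2.
  + by rewrite comps setUC.
  + by rewrite eq_sym.
- by case: F10.
Qed.
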